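(* Let $G$ be a strictly pseudo-solvable group such that $3\text-5$ is an edge of $\overline\Gamma(G)$. Then (in a chief series of) $G$ there is exactly one non-solvable chief factor, and it is isomorphic to $A_5$.
   Context: For a finite group $G$, the prime graph $\Gamma(G)$ has vertex set the prime divisors of $|G|$, with distinct primes $p,q$ adjacent iff $G$ has an element of order $pq$; $\overline\Gamma(G)$ is its complement graph. A finite group is pseudo-solvable if each composition factor is cyclic or isomorphic to $A_5$; strictly pseudo-solvable means pseudo-solvable and not solvable. *)

(* Defs.v *)
From mathcomp Require Import all_boot all_fingroup all_solvable.
Set Implicit Arguments. Unset Strict Implicit. Unset Printing Implicit Defensive.
Local Open Scope group_scope.

Definition A5 : {set {perm 'I_5}} := 'Alt_('I_5).

(* Pseudo-solvable: for every composition series G = H_0 > H_1 > ... > H_n = 1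
   (MathComp's [comps G s], with s = [H_1; ...; H_n]), every composition
   factor H_i / H_{i+1} is cyclic or isomorphic to A5. *)
Definition pseudo_solvable (gT : finGroupType) (G : {group gT}) : Prop :=
  forall s : seq {group gT}, comps G s ->
  forall i, i < size s ->
    let H := nth G (G :: s) i in
    let K := nth 1%G s i in
    cyclic (H / K) \/ (H / K) \isog A5.

Definition strictly_pseudo_solvable (gT : finGroupType) (G : {group gT}) : Prop :=
  pseudo_solvable G /\ ~~ solvable G.

Definition prime_graph_adj (gT : finGroupType) (G : {group gT}) (p q : nat) : bool :=
  [&& p \in \pi(G), q \in \pi(G), p != q & [exists x in G, #[x] == (p * q)%N]].

Definition compl_prime_graph_adj (gT : finGroupType) (G : {group gT}) (p q : nat) : bool :=
  [&& p \in \pi(G), q \in \pi(G), p != q & ~~ prime_graph_adj G p q].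

Definition chief_series (gT : finGroupType) (G : {group gT}) (s : seq {group gT}) : bool :=
  (G.-chief).-series 1%G s && (last 1%G s == G).

(* Main.v *)
Require Import Defs.
From mathcomp Require Import all_boot all_fingroup all_solvable.
Set Implicit Arguments. Unset Strict Implicit. Unset Printing Implicit Defensive.
Local Open Scope group_scope.
Lemma compo_to_normal (gT : finGroupType) n (G H : {group gT}) :
  #|G| <= n -> H <| G ->
  exists s : seq {group gT},
    path [rel x y : {group gT} | maxnormal y x x] G s /\ last G s = H.
Proof.
elim: n G => [|n IHn] G cG nHG.
  by move: cG; rewrite leqNgt cardG_gt0.
have [eHG | neHG] := eqVneq H G.
  by exists [::]; split.
have prHG : H \proper G by rewrite properEneq neHG normal_sub.
have [M maxM sHM] := @maxgroup_exists _
   [pred M : {group gT} | (M \proper G) && (G \subset 'N(M))] H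
   (introT andP (conj prHG (normal_norm nHG))).
have mM : maxnormal M G G by [].
have nHM : H <| M by apply: normalS sHM (maxnormal_sub mM) nHG.
have [|s [ps ls]] := IHn M _ nHM.
  by rewrite -ltnS (leq_trans _ cG) // proper_card // (maxnormal_proper mM).
by exists (M :: s); split => //=; rewrite mM.
Qed.
Lemma ps_factor (gT : finGroupType) (G V M : {group gT}) :
  pseudo_solvable G -> V <| G -> maxnormal M V V ->
  cyclic (V / M) \/ (V / M) \isog A5.
Proof.
move=> PS nVG mM.
have [s1 [p1 l1]] := compo_to_normal (leqnn #|G|) nVG.
have [s2 /compsP [l2 p2]] := exists_comps M.
have cs : comps G (s1 ++ M :: s2).
  apply/compsP; split; first by rewrite last_cat /= l2.
  by rewrite cat_path p1 /= l1 mM p2.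
have := PS _ cs (size s1).
rewrite size_cat /= addnS ltnS leq_addr => /(_ isT).
have -> : nth G (G :: s1 ++ M :: s2) (size s1) = V.
  rewrite -cat_cons nth_cat /= ltnSn.
  by rewrite -l1 -[size s1]/((size (G :: s1)).-1) nth_last.
by rewrite nth_cat ltnn subnn.
Qed.

Lemma ord15 (gT : finGroupType) (G : {group gT}) x :
  x \in G -> 15 %| #[x] -> exists2 y, y \in G & #[y] = 15.
Proof.
move=> Gx d15; exists (x ^+ (#[x] %/ 15)); first exact: groupX.
rewrite orderXdiv ?dvdn_div // divnA // mulKn ?order_gt0 //.
Qed.

Lemma card_A5 : #|A5| = 60.
Proof.
have := @card_Alt _ (ltac:(by rewrite card_ord) : 1 < #|'I_5|).
rewrite card_ord /A5.
move=> h. by apply/eqP; rewrite -(eqn_pmul2l (isT : 0 < 2)) h.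
Qed.

Lemma not_ab_factor (gT : finGroupType) (G U V X : {group gT}) :
  maxnormal U V G -> V <| G -> ~~ solvable (V / U) ->
  X \proper V -> V \subset 'N(X) -> U \subset X -> ~~ abelian (V / X).
Proof.
move=> mU nVG nsol prX nX sUX; apply/negP => abX.
have sV1X : V^`(1) \subset X := der1_min nX abX.
have nV1 : G \subset 'N(V^`(1)) := char_norm_trans (der_char 1 V) (normal_norm nVG).
case/andP: (maxgroupp mU) => prU nUG.
have gPJ : ((V^`(1) <*> U)%G \proper V) && (G \subset 'N(V^`(1) <*> U)).
  rewrite normsY // andbT; apply: sub_proper_trans prX.
  by rewrite join_subG sV1X sUX.
have := (maxgroupP mU).2 _ gPJ (joing_subr _ _) => eJ.
have sV1U : V^`(1) \subset U by rewrite -eJ joing_subl.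
by move: nsol; rewrite abelian_sol // sub_der1_abelian.
Qed.

Lemma A5_elt (gT : finGroupType) (V M : {group gT}) p :
  prime p -> p %| 60 -> (V / M) \isog A5 -> V \subset 'N(M) ->
  exists2 y, y \in V & #[coset M y] = p.
Proof.
move=> pp d60 iso nMV.
have [yb Vy oy] := @Cauchy _ p (V / M) pp ltac:(by rewrite (card_isog iso) card_A5).
case/morphimP: Vy => y Ny Vy' ey; exists y => //; by rewrite -ey.
Qed.

Lemma chief_A5 (gT : finGroupType) (G U V : {group gT}) :
  pseudo_solvable G -> (forall x, x \in G -> #[x] <> 15) ->
  maxnormal U V G -> V <| G -> ~~ solvable (V / U) -> (V / U) \isog A5.
Proof.
move=> PS no15 mU nVG nsol.
case/andP: (maxgroupp mU) => prU nUG.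
have sVG := normal_sub nVG.
have nVV : V \subset 'N(U) := subset_trans sVG nUG.
have [M mM sUM] := @maxgroup_exists _
  [pred M : {group gT} | (M \proper V) && (V \subset 'N(M))] U
  (introT andP (conj prU nVV)).
have mMV : maxnormal M V V by [].
case/andP: (maxgroupp mMV) => prM nMV.
have isoX : forall X : {group gT}, maxnormal X V V -> U \subset X -> (V / X) \isog A5.
  move=> X mX sUX; case/andP: (maxgroupp mX) => prX nXV.
  have := ps_factor PS nVG mX; case=> // cyc.
  by have := not_ab_factor mU nVG nsol prX nXV sUX; rewrite cyclic_abelian.
have isoM := isoX M mMV sUM.
have [eMU | neMU] := eqVneq M U; first by rewrite -eMU.
exfalso.
have nGM : ~~ (G \subset 'N(M)).
  apply/negP => nGM.
  have e := (maxgroupP mU).2 M (introT andP (conj prM nGM)) sUM.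
  by move: neMU; rewrite (val_inj e) eqxx.
case/subsetPn: nGM => g Gg nMg.
have nVg : V :^ g = V by apply/normP; apply: (subsetP (normal_norm nVG)).
have nUg : U :^ g = U by apply/normP; apply: (subsetP nUG).
have prM1 : (M :^ g)%G \proper V.
  rewrite properEcard /= cardJg proper_card // andbT.
  by rewrite -nVg conjSg (proper_sub prM).
have nM1V : V \subset 'N(M :^ g) by rewrite normJ -{1}nVg conjSg.
have sUM1 : U \subset M :^ g by rewrite -nUg conjSg.
have [M2 mM2 sM1M2] := @maxgroup_exists _
  [pred M : {group gT} | (M \proper V) && (V \subset 'N(M))] (M :^ g)%G
  (introT andP (conj prM1 nM1V)).
have mM2V : maxnormal M2 V V by [].
case/andP: (maxgroupp mM2V) => prM2 nM2V.
have isoM2 := isoX M2 mM2V (subset_trans sUM1 sM1M2).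
have neM2 : M2 != M.
  apply/negP => /eqP eM2; move: sM1M2; rewrite eM2 => sM1M.
  move: nMg; have: M :^ g == M by rewrite eqEcard sM1M cardJg leqnn.
  by move/eqP => e; rewrite (introT (normP) e).
have eV : M * M2 = V.
  have sJV : M <*> M2 \subset V by rewrite join_subG !proper_sub.
  case: (eqVproper sJV) => [<-|prJ]; first by rewrite norm_joinEr // (subset_trans (proper_sub prM2) nMV).
  have e := (maxgroupP mMV).2 (M <*> M2)%G (introT andP (conj prJ (normsY nMV nM2V))) (joing_subl _ _).
  have sM2M : M2 \subset M by rewrite -e joing_subr.
  have e2 := (maxgroupP mM2V).2 M (introT andP (conj prM nMV)) sM2M.
  by move: neM2; rewrite (val_inj e2) eqxx.
have [y Vy oy] := A5_elt (isT : prime 3) (isT : 3 %| 60) isoM nMV.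
have [z Vz oz] := A5_elt (isT : prime 5) (isT : 5 %| 60) isoM2 nM2V.
have nMM2 : M2 \subset 'N(M) := subset_trans (proper_sub prM2) nMV.
have nM2M : M \subset 'N(M2) := subset_trans (proper_sub prM) nM2V.
move: Vy oy; rewrite -eV => /mulsgP [m a Mm M2a ->].
move: Vz oz; rewrite -eV => /mulsgP [b m2 Mb M2m2 ->].
have Nm : m \in 'N(M) := subsetP (normG M) m Mm.
have Na : a \in 'N(M) := subsetP nMM2 a M2a.
have Nb : b \in 'N(M) := subsetP (normG M) b Mb.
have N2b : b \in 'N(M2) := subsetP nM2M b Mb.
have N2a : a \in 'N(M2) := subsetP (normG M2) a M2a.
have N2m2 : m2 \in 'N(M2) := subsetP (normG M2) m2 M2m2.
rewrite morphM //= (coset_id M2m2) mulg1 => ob.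
rewrite morphM //= (coset_id Mm) mul1g => oa.
have d3 : 3 %| #[a * b].
  rewrite -oa; have -> : coset M a = coset M (a * b) by rewrite morphM ?groupM //= (coset_id Mb) mulg1.
  by apply: morph_order; rewrite groupM.
have d5 : 5 %| #[a * b].
  rewrite -ob; have -> : coset M2 b = coset M2 (a * b) by rewrite morphM ?groupM //= (coset_id M2a) mul1g.
  by apply: morph_order; rewrite groupM.
have Gab : a * b \in G.
  by rewrite groupM // (subsetP sVG) // ?(subsetP (proper_sub prM2) a M2a) ?(subsetP (proper_sub prM) b Mb).
have [w Gw ow] := @ord15 _ G _ Gab ltac:(by rewrite (@Gauss_dvd 3 5) // d3 d5).
exact: no15 Gw ow.
Qed.
Lemma two_A5 (gT : finGroupType) (G N T L K : {group gT}) :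
  N <| G -> T <| G -> L <| G -> K <| G -> N \subset T -> T \subset L ->
  L \subset K -> (T / N) \isog A5 -> (K / L) \isog A5 ->
  exists2 x, x \in G & 15 %| #[x].
Proof.
move=> nNG nTG nLG nKG sNT sTL sLK isoT isoK.
have sKG := normal_sub nKG.
have nNK : K \subset 'N(N) := subset_trans sKG (normal_norm nNG).
have nLK : K \subset 'N(L) := subset_trans sKG (normal_norm nLG).
have sTK : T \subset K := subset_trans sTL sLK.
have nTK : T <| K := normalS sTK sKG nTG.
have nTbKb := quotient_normal N nTK.
have [P sylP] := Sylow_exists 5 (T / N).
have cP : #|P| = 5 by rewrite (card_Hall sylP) (card_isog isoT) card_A5 p_part.
have eK := Frattini_arg nTbKb sylP.
have [y Ky oy] := A5_elt (isT : prime 3) (isT : 3 %| 60) isoK nLK.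
have : coset N y \in K / N by rewrite mem_quotient.
rewrite -eK => /mulsgP [tb q Ttb Nq ey].
case/morphimP: Ttb => t0 Nt0 Tt0 etb.
case/setIP: Nq => Kq NPq.
case/morphimP: Kq => q0 Nq0 Kq0 eq.
have NNy : y \in 'N(N) := subsetP nNK y Ky.
have Kt0 : t0 \in K := subsetP sTK t0 Tt0.
have yN : y * (t0 * q0)^-1 \in N.
  apply: coset_idr; first by rewrite groupM ?groupV ?groupM.
  by rewrite morphM ?groupV ?groupM // morphV ?groupM // morphM // -etb -eq -ey mulgV.
have Ly : y \in 'N(L) := subsetP nLK y Ky.
have Lt0 : t0 \in 'N(L) := subsetP nLK t0 Kt0.
have Lq0 : q0 \in 'N(L) := subsetP nLK q0 Kq0.
have oq0 : #[coset L q0] = 3.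
  rewrite -oy; congr #[_].
  have -> : y = (y * (t0 * q0)^-1) * (t0 * q0) by rewrite mulgKV.
  have LyN : y * (t0 * q0)^-1 \in L := subsetP (subset_trans sNT sTL) _ yN.
  have LLt0 : t0 \in L := subsetP sTL t0 Tt0.
  have N1 : y * (t0 * q0)^-1 \in 'N(L) by rewrite groupM ?groupV ?groupM.
  have N2 : t0 * q0 \in 'N(L) by rewrite groupM.
  have h1 := coset_id LyN; have h2 := coset_id LLt0.
  by rewrite morphM //= h1 mul1g; rewrite morphM //= h2 mul1g.
pose w0 := q0.`_3.
have Kw0 : w0 \in K by apply: (subsetP _ _ (cycle_constt 3 q0)); rewrite cycle_subG.
have Nw0 : w0 \in 'N(N) := subsetP nNK w0 Kw0.
have cLw0 : coset L w0 = coset L q0.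
  by rewrite /w0 morph_constt // constt_p_elt // /p_elt oq0 pnat_id.
pose w := coset N w0.
have ew : w = q.`_3 by rewrite /w /w0 morph_constt // eq.
have NPw : w \in 'N(P).
  by rewrite ew; apply: (subsetP _ _ (cycle_constt 3 q)); rewrite cycle_subG.
have pw : 3.-elt w by rewrite ew p_elt_constt.
have ntw : w != 1.
  apply/eqP => w1.
  have : w0 \in L by apply: (subsetP (subset_trans sNT sTL)); apply: coset_idr.
  move/coset_id; rewrite cLw0 => c1.
  by move: oq0; rewrite c1 order1.
have cycP : cyclic P by rewrite prime_cyclic // cP.
have AutP : conj_aut P w \in Aut P.
  by apply: (subsetP (Aut_conj_aut P 'N(P))); rewrite mem_morphim.
have d4 : #[conj_aut P w] %| 4.
  rewrite (_ : 4 = totient #|P|); last by rewrite cP.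
  by rewrite -card_Aut_cyclic // order_dvdG.
have p3 : 3.-nat #[conj_aut P w] := pnat_dvd (morph_order _ NPw) pw.
have fw1 : conj_aut P w = 1.
  apply/eqP; rewrite -order_eq1; move: d4 p3; case: #[_] => [|[|[|[|[|n]]]]] //.
have CPw : w \in 'C(P) by rewrite -ker_conj_aut; apply/kerP.
case/cyclicP: cycP => t eP.
have ot : #[t] = 5 by rewrite -cP eP.
have Tt : t \in T / N by apply: (subsetP (pHall_sub sylP)); rewrite eP cycle_id.
have cwt : commute w t by apply/cent1P; rewrite -cent_cycle -eP.
have [k ek] := p_natP pw.
have cop : coprime #[w] #[t] by rewrite ek ot coprimeXl.
have d15 : 15 %| #[w * t].
  rewrite orderM // ek ot; case: k ek => [|k] ek.
    by move: ntw; rewrite -order_eq1 ek.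
  by rewrite expnS mulnAC dvdn_mulr.
case/morphimP: Tt => t1 Nt1 Tt1 et.
exists (w0 * t1).
  by rewrite groupM // (subsetP sKG) // (subsetP sTK).
apply: dvdn_trans d15 _.
have -> : w * t = coset N (w0 * t1) by rewrite morphM // et.
by apply: morph_order; rewrite groupM.
Qed.
Theorem mainTheorem8 (gT : finGroupType) (G : {group gT}) :
  strictly_pseudo_solvable G ->
  compl_prime_graph_adj G 3 5 ->
  forall s : seq {group gT}, chief_series G s ->
  exists i, [/\ i < size s,
     ~~ solvable (nth 1%G s i / nth 1%G (1%G :: s) i),
     (nth 1%G s i / nth 1%G (1%G :: s) i) \isog A5
   & forall j, j < size s ->
       ~~ solvable (nth 1%G s j / nth 1%G (1%G :: s) j) -> j = i].
Proof.
move=> [PS nsolG] /and4P [pi3 pi5 _ nadj] s /andP [ps /eqP ls].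
have no15 : forall x, x \in G -> #[x] <> 15.
  move=> x Gx ox; move: nadj; rewrite /prime_graph_adj pi3 pi5 /=.
  by case/negP; apply/existsP; exists x; rewrite Gx ox.
pose a j := nth 1%G (1%G :: s) j.
have cf : forall j, j < size s -> chief_factor G (a j) (nth 1%G s j).
  by move=> j lj; apply: (pathP 1%G ps j lj).
have nB : forall j, j < size s -> nth 1%G s j <| G.
  by move=> j lj; case/andP: (cf j lj).
have nA : forall j, j <= size s -> a j <| G.
  case=> [|j] lj; first exact: normal1.
  exact: nB.
have sA : forall j, j < size s -> a j \subset nth 1%G s j.
  by move=> j lj; case/andP: (cf j lj) => /maxnormal_sub.
have mono : forall j k, j <= k -> k <= size s -> a j \subset a k.
  move=> j k jk; elim: k jk => [|k IHk]; first by rewrite leqn0 => /eqP ->.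
  rewrite leq_eqVlt => /orP [/eqP -> //| jk] lk.
  exact: subset_trans (IHk jk (ltnW lk)) (sA k lk).
have aG : a (size s) = G by rewrite /a -ls -[size s]/((size (1%G :: s)).-1) nth_last.
have iso : forall j, j < size s -> ~~ solvable (nth 1%G s j / a j) ->
    (nth 1%G s j / a j) \isog A5.
  by move=> j lj ns; case/andP: (cf j lj) => mj nj; exact: (chief_A5 PS no15 mj nj ns).
have contra : forall i j, i < j -> j < size s -> ~~ solvable (nth 1%G s i / a i) ->
    ~~ solvable (nth 1%G s j / a j) -> False.
  move=> i j ij lj nsi nsj.
  have li : i < size s := ltn_trans ij lj.
  have [x Gx dx] := two_A5 (nA i (ltnW li)) (nB i li) (nA j (ltnW lj)) (nB j lj)
     (sA i li) (mono i.+1 j ij (ltnW lj)) (sA j lj) (iso i li nsi) (iso j lj nsj).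
  have [y Gy oy] := ord15 Gx dx.
  exact: no15 Gy oy.
case: (pickP (fun i : 'I_(size s) => ~~ solvable (nth 1%G s i / a i))) => [i nsi | none].
  exists (val i); split; [exact: ltn_ord | exact: nsi | exact: (iso i (ltn_ord i) nsi) | ].
  move=> j lj nsj; case: (ltngtP j i) => // [ji | ij].
    by case: (contra j i ji (ltn_ord i) nsj nsi).
  by case: (contra i j ij lj nsi nsj).
exfalso; move: nsolG; apply/negP/negPn.
rewrite -aG.
suff : forall k, k <= size s -> solvable (a k) by apply.
elim=> [|k IHk] lk; first by rewrite /a /= solvable1.
have nk : a k <| nth 1%G s k.
  case/andP: (cf k lk) => /maxgroupp /andP [prk nk] nBk.
  by rewrite /normal (proper_sub prk) (subset_trans (normal_sub nBk) nk).
rewrite [a k.+1]/a /= (series_sol nk) IHk ?(ltnW lk) //=.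
by have := none (Ordinal lk) => /= /negbFE.
Qed.
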